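(* Let $\alpha$, $F_\alpha$ and $L_\alpha$ be as in the context. The jump transformation $F^*_\alpha$ of $F_\alpha$ with respect to $A_1$, defined by $F_\alpha^*(x):=F_\alpha^{\rho_\alpha(x)}(x)$ where $\rho_\alpha(x):=\inf\{n\ge0:F_\alpha^n(x)\in A_1\}+1$, coincides with $L_\alpha$ (on $\mathcal U\setminus\{0\}$, where $\rho_\alpha$ is finite).
   Context: Let $\mathcal U=[0,1]$. $\alpha=\{A_n:n\in\mathbb N\}$ is a countable partition of $\mathcal U$ (up to the point $0$) into left-open, right-closed intervals of positive length, ordered from right to left starting with $A_1$, accumulating only at $0$; $a_n$ is the length of $A_n$ and $t_n:=\sum_{k\ge n}a_k$, so $A_n=(t_{n+1},t_n]$. The $\alpha$-Farey map is $F_\alpha(x)=(1-x)/a_1$ on $A_1$, $F_\alpha(x)=a_{n-1}(x-t_{n+1})/a_n+t_n$ on $A_n$ ($n\ge2$), $F_\alpha(0)=0$. The $\alpha$-Lüroth map is $L_\alpha(x)=(t_n-x)/a_n$ on $A_n$, $L_\alpha(0)=0$. *)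

(* Defs.v *)
From Stdlib Require Import Reals Lra Lia Arith ClassicalEpsilon.
From Coquelicot Require Import Coquelicot.
Open Scope R_scope.

(* A partition alpha is given by the sequence of lengths a : nat -> R,
   indexed from 1 (a 0 is unused).  Conditions: a n > 0 for n >= 1 and
   sum_{n>=1} a n = 1, i.e. the A_n cover (0,1]. *)
Definition is_partition (a : nat -> R) : Prop :=
  (forall n, (1 <= n)%nat -> 0 < a n) /\ is_series (fun k => a (S k)) 1.

Definition tail (a : nat -> R) (n : nat) : R := Series (fun k => a (n + k)%nat).

Definition inA (a : nat -> R) (n : nat) (x : R) : Prop :=
  tail a (S n) < x <= tail a n.

Definition idx (a : nat -> R) (x : R) : nat :=
  epsilon (inhabits 0%nat) (fun n => (1 <= n)%nat /\ inA a n x).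

Definition Farey (a : nat -> R) (x : R) : R :=
  if Req_EM_T x 0 then 0 else
  let n := idx a x in
  if Nat.eqb n 1 then (1 - x) / a 1%nat
  else a (n - 1)%nat * (x - tail a (S n)) / a n + tail a n.

Definition Luroth (a : nat -> R) (x : R) : R :=
  if Req_EM_T x 0 then 0 else
  let n := idx a x in (tail a n - x) / a n.

Definition hitsA1 (a : nat -> R) (x : R) (m : nat) : Prop :=
  inA a 1 (Nat.iter m (Farey a) x).

Definition rho (a : nat -> R) (x : R) : nat :=
  S (epsilon (inhabits 0%nat)
       (fun m => hitsA1 a x m /\ forall k, (k < m)%nat -> ~ hitsA1 a x k)).

Definition Fstar (a : nat -> R) (x : R) : R := Nat.iter (rho a x) (Farey a) x.

(* Main.v *)
Require Import Defs.
From Stdlib Require Import Reals Lra Lia Arith ClassicalEpsilon.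
From Coquelicot Require Import Coquelicot.
Open Scope R_scope.

Section S.
Variable a : nat -> R.
Hypothesis Ha : is_partition a.

Lemma ex_tail n : (1 <= n)%nat -> ex_series (fun k => a (n + k)%nat).
Proof.
  destruct Ha as [_ Hs].
  induction n; intros H. lia.
  destruct n. exists 1. exact Hs.
  apply (ex_series_ext (fun k => a (S n + S k)%nat)).
  intros; f_equal; lia.
  apply ex_series_incr_1 with (a := fun k => a (S n + k)%nat). apply IHn. lia.
Qed.

Lemma tail_rec n : (1 <= n)%nat -> tail a n = a n + tail a (S n).
Proof.
  intros H. unfold tail. rewrite Series_incr_1 by now apply ex_tail.
  rewrite Nat.add_0_r. f_equal. apply Series_ext. intros; f_equal; lia.
Qed.

Lemma tail1 : tail a 1 = 1.
Proof. destruct Ha as [_ Hs]. unfold tail. now apply is_series_unique. Qed.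

Lemma tail_nonneg n : (1 <= n)%nat -> 0 <= tail a n.
Proof.
  intros H. destruct Ha as [Hp _]. unfold tail.
  replace 0 with (Series (fun _ : nat => 0)).
  apply Series_le. intros k. split. lra. left; apply Hp; lia.
  now apply ex_tail.
  transitivity (0 * Series (fun _ : nat => 0)).
  rewrite <- Series_scal_l. apply Series_ext; intros; ring. ring.
Qed.

Lemma tail_mono m n : (1 <= m)%nat -> (m <= n)%nat -> tail a n <= tail a m.
Proof.
  intros H1 H2. induction H2. lra.
  rewrite (tail_rec m0) in IHle by lia. destruct Ha as [Hp _].
  specialize (Hp m0 ltac:(lia)). lra.
Qed.

Lemma tail_formula n : tail a (S (S n)) = 1 - sum_n (fun k => a (S k)) n.
Proof.
  induction n.
  - rewrite sum_O. pose proof (tail_rec 1 (le_n _)). rewrite tail1 in H. lra.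
  - rewrite sum_Sn. unfold plus; simpl. pose proof (tail_rec (S (S n)) ltac:(lia)). lra.
Qed.

Lemma exists_small x : 0 < x -> exists N, (1 <= N)%nat /\ tail a N < x.
Proof.
  intros Hx. destruct Ha as [_ Hs].
  assert (L : is_lim_seq (sum_n (fun k => a (S k))) 1) by exact Hs.
  apply is_lim_seq_spec in L. destruct (L (mkposreal x Hx)) as [N HN].
  exists (S (S N)). split. lia. rewrite tail_formula.
  specialize (HN N (le_n _)). simpl in HN. apply Rabs_def2 in HN. lra.
Qed.

Lemma exists_idx x : 0 < x <= 1 -> exists n, (1 <= n)%nat /\ inA a n x.
Proof.
  intros Hx. destruct (exists_small x ltac:(lra)) as [N [HN1 HN2]].
  induction N. lia.
  destruct N. rewrite tail1 in HN2. lra.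
  destruct (Rle_lt_dec x (tail a (S N))).
  - exists (S N). split. lia. split; assumption.
  - apply IHN; auto; lia.
Qed.

Lemma inA_unique m n x : (1 <= m)%nat -> (1 <= n)%nat -> inA a m x -> inA a n x -> m = n.
Proof.
  intros. unfold inA in *.
  destruct (lt_eq_lt_dec m n) as [[L|L]|L]; auto.
  - pose proof (tail_mono (S m) n ltac:(lia) ltac:(lia)). lra.
  - pose proof (tail_mono (S n) m ltac:(lia) ltac:(lia)). lra.
Qed.

Lemma idx_spec n x : (1 <= n)%nat -> inA a n x -> idx a x = n.
Proof.
  intros H1 H2. unfold idx.
  destruct (epsilon_spec (inhabits 0%nat) (fun n => (1 <= n)%nat /\ inA a n x))
    as [E1 E2]. exists n; auto.
  eapply inA_unique; eauto.
Qed.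

Lemma inA_param m r : (1 <= m)%nat -> 0 < r <= 1 -> inA a m (tail a (S m) + r * a m).
Proof.
  intros H Hr. destruct Ha as [Hp _]. specialize (Hp m H).
  unfold inA. rewrite (tail_rec m H). split; nra.
Qed.

Lemma Farey_step m r : (2 <= m)%nat -> 0 < r <= 1 ->
  Farey a (tail a (S m) + r * a m) = tail a m + r * a (m - 1)%nat.
Proof.
  intros H Hr. pose proof (tail_nonneg (S m) ltac:(lia)).
  destruct Ha as [Hp _]. pose proof (Hp m ltac:(lia)).
  unfold Farey. destruct (Req_EM_T _ 0). nra.
  rewrite (idx_spec m) by (lia || (apply inA_param; auto; lia)).
  destruct (Nat.eqb_spec m 1). lia.
  field. lra.
Qed.

Lemma Farey_iter j m r : (1 <= m)%nat -> 0 < r <= 1 ->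
  Nat.iter j (Farey a) (tail a (S (m + j)) + r * a (m + j)%nat) = tail a (S m) + r * a m.
Proof.
  revert m. induction j; intros m Hm Hr.
  - simpl. rewrite Nat.add_0_r. reflexivity.
  - replace (m + S j)%nat with (S m + j)%nat by lia.
    change (Farey a (Nat.iter j (Farey a) (tail a (S (S m + j)) + r * a (S m + j)%nat)) = tail a (S m) + r * a m).
    rewrite (IHj (S m)) by (lia || auto).
    rewrite Farey_step by (lia || auto). simpl. rewrite Nat.sub_0_r. reflexivity.
Qed.

End S.

Theorem lemma2p1 (a : nat -> R) (Ha : is_partition a) (x : R) :
  0 < x <= 1 ->
  (exists m : nat, hitsA1 a x m) /\ Fstar a x = Luroth a x.
Proof.
  intros Hx.
  destruct (exists_idx a Ha x Hx) as [n [Hn HA]].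
  destruct Ha as [Hp Hs] eqn:EHa.
  pose proof (Hp n Hn) as Han.
  set (r := (x - tail a (S n)) / a n).
  assert (Hxr : x = tail a (S n) + r * a n).
  { unfold r. field. lra. }
  assert (Hr : 0 < r <= 1).
  { unfold inA in HA. rewrite (tail_rec a Ha n Hn) in HA. unfold r.
    split. apply Rdiv_lt_0_compat; lra.
    apply Rmult_le_reg_r with (a n). lra. unfold Rdiv. rewrite Rmult_assoc, Rinv_l; lra. }
  assert (Hit : forall k, (k <= n - 1)%nat ->
     Nat.iter k (Farey a) x = tail a (S (n - k)) + r * a (n - k)%nat).
  { intros k Hk. rewrite Hxr. replace n with ((n - k) + k)%nat at 1 2 by lia.
    apply Farey_iter; auto; lia. }
  assert (Hhit : hitsA1 a x (n - 1)).
  { unfold hitsA1. rewrite Hit by lia. replace (n - (n-1))%nat with 1%nat by lia.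
    apply inA_param; auto. }
  assert (Hno : forall k, (k < n - 1)%nat -> ~ hitsA1 a x k).
  { intros k Hk H. unfold hitsA1 in H. rewrite Hit in H by lia.
    pose proof (inA_param a Ha (n - k) r ltac:(lia) Hr).
    pose proof (inA_unique a Ha 1 (n - k) _ (le_n 1) ltac:(lia) H H0). lia. }
  split. exists (n - 1)%nat; exact Hhit.
  assert (Hrho : rho a x = n).
  { unfold rho.
    destruct (epsilon_spec (inhabits 0%nat)
      (fun m => hitsA1 a x m /\ forall k, (k < m)%nat -> ~ hitsA1 a x k)) as [E1 E2].
    exists (n - 1)%nat. auto.
    set (e := epsilon _ _) in *.
    destruct (lt_eq_lt_dec e (n - 1)) as [[L|L]|L].
    - exfalso. exact (Hno e L E1).
    - lia.
    - exfalso. exact (E2 _ L Hhit). }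
  unfold Fstar. rewrite Hrho.
  assert (Eit : Nat.iter n (Farey a) x = Farey a (Nat.iter (n-1) (Farey a) x)).
  { destruct n. lia. simpl. rewrite Nat.sub_0_r. reflexivity. }
  rewrite Eit, (Hit (n-1)%nat (le_n _)).
  replace (n - (n - 1))%nat with 1%nat by lia.
  pose proof (Hp 1%nat (le_n _)) as Ha1.
  pose proof (tail_nonneg a Ha 2 ltac:(lia)).
  pose proof (tail_rec a Ha 1 (le_n _)) as T1. rewrite (tail1 a Ha) in T1.
  unfold Farey. destruct (Req_EM_T _ 0). nra.
  rewrite (idx_spec a Ha 1) by (lia || (apply inA_param; auto)). simpl.
  unfold Luroth. destruct (Req_EM_T x 0). lra.
  rewrite (idx_spec a Ha n) by auto.
  rewrite (tail_rec a Ha n Hn), Hxr. transitivity (1 - r).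
  rewrite T1 at 1. field. lra. field. lra.
Qed.
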